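(* Let $H$ be a hypergraph with $R(H)=\{1,2\}$ such that the graph $H^2$ of its $2$-edges is bipartite and $H$ contains no closed path $\bar P_{2k}$ as a subgraph for any $k\ge1$. Then $\pi(H)=1$.
   Context: A hypergraph $H=(V,E)$ has finite vertex set $V$ and edge set $E\subseteq 2^V$; $R(H)=\{|F|:F\in E\}$. $H_1\subseteq H_2$ (subgraph) means there is an injective $f\colon V(H_1)\to V(H_2)$ with $f(F)\in E(H_2)$ for all $F\in E(H_1)$. For $G$ on $n$ vertices, $h_n(G)=\sum_{F\in E(G)}1/\binom{n}{|F|}$; $\pi_n(H)=\max\{h_n(G): G\text{ on } n \text{ vertices}, R(G)\subseteq R(H), H\not\subseteq G\}$ and $\pi(H)=\lim_n\pi_n(H)$. A closed path of length $m$, $\bar P_m$, is the hypergraph with vertices $x_1,\dots,x_m$, $1$-edges $\{x_1\},\{x_m\}$ and $2$-edges $\{x_i,x_{i+1}\}$ for $1\le i\le m-1$. *)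

(* Defs.v *)
From HB Require Import structures.
From mathcomp Require Import all_boot all_order all_algebra.
From mathcomp Require Import all_classical all_reals all_analysis.
Set Implicit Arguments. Unset Strict Implicit. Unset Printing Implicit Defensive.
Import Order.TTheory GRing.Theory Num.Theory.
Local Open Scope ring_scope.

Definition hsizes (V : finType) (E : {set {set V}}) (k : nat) : bool :=
  [exists F in E, #|F| == k].

Definition subhyp (V1 V2 : finType) (E1 : {set {set V1}}) (E2 : {set {set V2}}) : bool :=
  [exists f : {ffun V1 -> V2}, injectiveb f && [forall F in E1, (f @: F) \in E2]].

(* Closed path \bar P_m on vertices 'I_m (x_1..x_m = 0..m-1):
   1-edges {x_1},{x_m}; 2-edges {x_i,x_{i+1}}. *)
Definition closed_path (m : nat) : {set {set 'I_m}} :=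
  [set F : {set 'I_m} |
     [exists i : 'I_m, (F == [set i]) && ((val i == 0%N) || (val i == m.-1))]
  || [exists i : 'I_m, exists j : 'I_m, (F == [set i; j]) && (val j == (val i).+1)]].

Definition bipartite2 (V : finType) (E : {set {set V}}) : Prop :=
  exists c : V -> bool, forall x y : V, x != y -> [set x; y] \in E -> c x != c y.

Definition hn (R : realType) (n : nat) (G : {set {set 'I_n}}) : R :=
  \sum_(F in G) ('C(n, #|F|)%:R)^-1.

Definition admissible (V : finType) (H : {set {set V}}) (n : nat)
  (G : {set {set 'I_n}}) : bool :=
  [forall F in G, hsizes H #|F|] && ~~ subhyp H G.

(* pi_n(H) = max of h_n(G) over admissible G (the empty G is admissible
   whenever H has an edge, and h_n >= 0, so folding max from 0 is the max). *)
Definition pin (R : realType) (V : finType) (H : {set {set V}}) (n : nat) : R :=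
  \big[Num.max/0]_(G : {set {set 'I_n}} | admissible H G) hn R G.

(* Main.v *)
Require Import Defs.
From HB Require Import structures.
From mathcomp Require Import all_boot all_order all_algebra.
From mathcomp Require Import all_classical all_reals all_analysis.
From mathcomp Require Import zify ring lra.
Import Order.TTheory GRing.Theory Num.Theory numFieldNormedType.Exports.
Set Implicit Arguments. Unset Strict Implicit. Unset Printing Implicit Defensive.

Section Emb.
Variables (V : finType) (H : {set {set V}}).

Definition erel : rel V := fun u v => (u != v) && ([set u; v] \in H).
Definition one (v : V) : bool := [set v] \in H.

Lemma erel_sym : symmetric erel.
Proof. by move=> u v; rewrite /erel eq_sym finset.setUC. Qed.

Lemma parity (c : V -> bool) :
  (forall x y, x != y -> [set x; y] \in H -> c x != c y) ->
  forall x p, path erel x p -> c (last x p) = c x (+) odd (size p).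
Proof.
move=> hc x p; elim: p x => [|y p IH] x /=; first by rewrite addbF.
case/andP=> /andP[hxy hin] hp; rewrite IH //.
have := hc _ _ hxy hin; case: (c x); case: (c y) => //= _; by case: (odd _).
Qed.

Lemma keyB (c : V -> bool) :
  (forall x y, x != y -> [set x; y] \in H -> c x != c y) ->
  (forall k : nat, (0 < k)%N -> ~~ subhyp (closed_path (2 * k)) H) ->
  forall a b, one a -> one b -> connect erel a b -> c a = c b.
Proof.
move=> hc hP a b oa ob /connectP[p hp hb]; subst b.
move: ob; case: (shortenP hp) => p' hp' hu _ {hp p} ob.
apply/eqP/negPn/negP => hne.
have hpar := parity hc hp'.
have hodd : odd (size p').
  by move: hne; rewrite hpar; case: (c a); case: (odd _).
set k := (size p').+1./2.
have hk : (2 * k)%N = (size p').+1.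
  rewrite /k -{2}(odd_double_half (size p').+1) /= hodd /= mul2n. by [].
have kpos : (0 < k)%N by rewrite -(ltn_pmul2l (isT : (0 < 2)%N)) hk.
apply: (negP (hP k kpos)).
apply/existsP; exists [ffun i : 'I_(2*k) => nth a (a :: p') i].
apply/andP; split.
  apply/injectiveP => i j; rewrite !ffunE => /eqP.
  rewrite nth_uniq //=; try by rewrite -hk ltn_ord.
  by move/eqP/val_inj.
apply/forallP => F; apply/implyP; rewrite /closed_path inE => /orP[].
  case/existsP => i /andP[/eqP -> /orP[] /eqP hi].
    by rewrite imset_set1 ffunE hi.
  rewrite imset_set1 ffunE hi.
  have -> : (2 * k).-1 = (size (a :: p')).-1 by rewrite hk.
  by rewrite /= -last_nth.
case/existsP => i /existsP[j /andP[/eqP -> /eqP hj]].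
rewrite imsetU1 imset_set1 !ffunE hj.
have hi : (i < size p')%N by rewrite -ltnS -hk -hj ltn_ord.
have := (pathP a hp' i hi) => /andP[_]; by [].
Qed.

Definition comp1 (v : V) := [exists a, one a && connect erel a v].
Definition sigma (c : V -> bool) (v : V) :=
  if comp1 v then [exists a, [&& one a, connect erel a v & c a == c v]] else c v.

Lemma sigma_one c v : one v -> sigma c v.
Proof.
move=> ov; rewrite /sigma.
have -> : comp1 v by apply/existsP; exists v; rewrite ov connect0.
by apply/existsP; exists v; rewrite ov connect0 eqxx.
Qed.

Lemma sigma_edge (c : V -> bool) :
  (forall x y, x != y -> [set x; y] \in H -> c x != c y) ->
  (forall k : nat, (0 < k)%N -> ~~ subhyp (closed_path (2 * k)) H) ->
  forall u v, erel u v -> sigma c u != sigma c v.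
Proof.
move=> hc hP u v huv.
have cuv : c u != c v by case/andP: huv => h1 h2; exact: hc.
have csym := sym_connect_sym erel_sym.
have cuv' : connect erel u v by apply: connect1.
have cvu : connect erel v u by rewrite csym.
have ceq : forall a, connect erel a u = connect erel a v.
  move=> a; apply/idP/idP => h; [ exact: (connect_trans h cuv') | exact: (connect_trans h cvu) ].
have hc1 : comp1 u = comp1 v.
  by rewrite /comp1; apply: eq_existsb => a; rewrite ceq.
rewrite /sigma -hc1.
case hcu: (comp1 u) => //.
apply/negP => /eqP heq.
case/existsP: hcu => a0 /andP[oa0 ca0].
case e1: [exists a, [&& one a, connect erel a u & c a == c u]] heq.
  move=> /esym e2.
  case/existsP: e1 => a1 /and3P[ho1 c1 /eqP h1].
  case/existsP: e2 => a2 /and3P[ho2 c2 /eqP h2].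
  have c12 : connect erel a1 a2.
    apply: connect_trans c1 _; rewrite csym; exact: connect_trans c2 cvu.
  have := keyB hc hP ho1 ho2 c12; rewrite h1 h2 => /eqP; by rewrite (negbTE cuv).
move=> /esym e2.
move/negbT: e1 => /existsPn /(_ a0); rewrite oa0 ca0 /= => h1.
move/negbT: e2 => /existsPn /(_ a0); rewrite oa0 -ceq ca0 /= => h2.
by move: cuv h1 h2; case: (c u); case: (c v); case: (c a0).
Qed.


Lemma embed (n : nat) (G : {set {set 'I_n}}) (X Y : {set 'I_n}) (z : 'I_n)
  (c : V -> bool) :
  (forall F, F \in H -> #|F| = 1%N \/ #|F| = 2%N) ->
  (forall x y, x != y -> [set x; y] \in H -> c x != c y) ->
  (forall k : nat, (0 < k)%N -> ~~ subhyp (closed_path (2 * k)) H) ->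
  (#|V| <= #|X|)%N -> (#|V| <= #|Y|)%N ->
  (forall x, x \in X -> [set x] \in G) ->
  (forall x y, x \in X -> y \in Y -> (x != y) && ([set x; y] \in G)) ->
  subhyp H G.
Proof.
move=> hF hc hP hX hY h1 h2.
pose fX (v : V) := nth z (enum X) (enum_rank v).
pose fY (v : V) := nth z (enum Y) (enum_rank v).
have fXin v : fX v \in X.
  rewrite -mem_enum /fX mem_nth // -cardE; exact: leq_trans (ltn_ord _) hX.
have fYin v : fY v \in Y.
  rewrite -mem_enum /fY mem_nth // -cardE; exact: leq_trans (ltn_ord _) hY.
have fXinj : injective fX.
  move=> u v /eqP; rewrite /fX nth_uniq ?enum_uniq //; last 2 first.
  - rewrite -cardE; exact: leq_trans (ltn_ord _) hX.
  - rewrite -cardE; exact: leq_trans (ltn_ord _) hX.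
  by move/eqP/val_inj/enum_rank_inj.
have fYinj : injective fY.
  move=> u v /eqP; rewrite /fY nth_uniq ?enum_uniq //; last 2 first.
  - rewrite -cardE; exact: leq_trans (ltn_ord _) hY.
  - rewrite -cardE; exact: leq_trans (ltn_ord _) hY.
  by move/eqP/val_inj/enum_rank_inj.
pose f (v : V) := if sigma c v then fX v else fY v.
apply/existsP; exists [ffun v => f v].
apply/andP; split.
  apply/injectiveP => u v; rewrite !ffunE /f.
  case: (sigma c u); case: (sigma c v) => //.
  - exact: fXinj.
  - move=> e; have := h2 _ _ (fXin u) (fYin v); by rewrite e eqxx.
  - move=> e; have := h2 _ _ (fXin v) (fYin u); by rewrite e eqxx.
  - exact: fYinj.
apply/forallP => F; apply/implyP => hFin.
case: (hF F hFin) => /eqP.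
  case/cards1P => v Fv; subst F.
  rewrite imset_set1 ffunE /f sigma_one //; exact: h1.
case/cards2P => u [v [huv Fv]]; subst F.
have e : erel u v by rewrite /erel huv hFin.
have := sigma_edge hc hP e.
rewrite imsetU1 imset_set1 !ffunE /f.
case: (sigma c u); case: (sigma c v) => //= _.
  by case/andP: (h2 _ _ (fXin u) (fYin v)).
by case/andP: (h2 _ _ (fXin v) (fYin u)) => _; rewrite finset.setUC.
Qed.

End Emb.

Section KST.
Local Open Scope nat_scope.
Variables (n : nat) (G : {set {set 'I_n}}).

Definition adj (x y : 'I_n) := (x != y) && ([set x; y] \in G).
Definition Sset := [set x : 'I_n | [set x] \in G].
Definition Nb (y : 'I_n) := [set x in Sset | adj x y].

Lemma kst (t : nat) : 0 < t ->
  (t - 1) * 'C(n, t) < \sum_y 'C(#|Nb y|, t) ->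
  exists X Y : {set 'I_n}, [/\ #|X| = t, t <= #|Y|, X \subset Sset &
     forall x y, x \in X -> y \in Y -> adj x y].
Proof.
move=> t0 hlt.
have E : \sum_y 'C(#|Nb y|, t) =
   \sum_(T : {set 'I_n}) #|[set y | (T \subset Nb y) && (#|T| == t)]|.
  under eq_bigr => y _ do rewrite -cards_draws -sum1_card big_mkcond /=.
  rewrite exchange_big; apply: eq_bigr => T _.
  rewrite -sum1_card [RHS]big_mkcond /=; apply: eq_bigr => y _; rewrite !inE //.
rewrite E in hlt.
have [T /andP[/eqP hT hY]] : exists T : {set 'I_n},
    (#|T| == t) && (t <= #|[set y | (T \subset Nb y) && (#|T| == t)]|).
  apply/existsP; apply: contraT => /existsPn hn.
  suff : \sum_(T : {set 'I_n}) #|[set y | (T \subset Nb y) && (#|T| == t)]| <= (t - 1) * 'C(n, t).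
    by rewrite leqNgt hlt.
  apply: (@leq_trans (\sum_(T : {set 'I_n}) ((#|T| == t) * (t - 1)))).
    apply: leq_sum => T _; move: (hn T).
    case hTt: (#|T| == t) => /=.
      rewrite mul1n -ltnNge => h; rewrite -ltnS; apply: (leq_trans h).
      by rewrite subn1 prednK.
    move=> _; rewrite mul0n leqn0 cards_eq0; apply/eqP/setP => y.
    by rewrite !inE andbF.
  rewrite (eq_bigr (fun T : {set 'I_n} => if #|T| == t then t - 1 else 0)); last first.
    by move=> T _; case: (_ == _); rewrite ?mul1n ?mul0n.
  rewrite -big_mkcond /= sum_nat_cond_const card_draws card_ord mulnC.
  by [].
pose Y := [set y | (T \subset Nb y) && (#|T| == t)].
exists T, Y; split => //.
  have : 0 < #|Y| by exact: leq_trans t0 hY.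
  rewrite card_gt0 => /set0Pn[y]; rewrite inE => /andP[hs _].
  apply: (fintype.subset_trans hs); apply/fintype.subsetP => x; rewrite inE; by case/andP.
move=> x y hx; rewrite inE => /andP[/fintype.subsetP hs _].
by have := hs x hx; rewrite inE => /andP[].
Qed.


Lemma s1_le : #|[set F in G | #|F| == 1]| <= #|Sset|.
Proof.
apply: (@leq_trans #|[set [set x] | x in Sset]|); last exact: leq_imset_card.
apply: subset_leq_card; apply/fintype.subsetP => F; rewrite inE => /andP[hF /cards1P[x Fx]].
subst F; apply/imsetP; exists x => //; by rewrite inE.
Qed.

Lemma pairs_card : #|[set p : 'I_n * 'I_n | p.2 \in Nb p.1]| = \sum_y #|Nb y|.
Proof.
rewrite -sum1_card big_mkcond /=.
rewrite (eq_bigr (fun p : 'I_n * 'I_n => if p.2 \in Nb p.1 then 1 else 0)); last first.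
  by move=> p _; rewrite inE.
rewrite -(pair_big xpredT xpredT (fun y x => if x \in Nb y then 1 else 0)) /=.
by apply: eq_bigr => y _; rewrite -sum1_card [RHS]big_mkcond.
Qed.

Lemma e_le : #|[set F in G | #|F| == 2]| <= 'C(n - #|Sset|, 2) + \sum_y #|Nb y|.
Proof.
pose Ein := [set F : {set 'I_n} | F \subset ~: Sset & #|F| == 2].
pose P := [set p : 'I_n * 'I_n | p.2 \in Nb p.1].
pose Em := [set [set p.2; p.1] | p in P].
have hEin : #|Ein| = 'C(n - #|Sset|, 2).
  by rewrite cards_draws cardsCs finset.setCK card_ord.
apply: (@leq_trans #|Ein :|: Em|).
  apply: subset_leq_card; apply/fintype.subsetP => F; rewrite inE => /andP[hF h2].
  rewrite finset.in_setU.
  case hs: (F \subset ~: Sset); first by rewrite inE hs h2.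
  apply/orP; right.
  move/negbT: hs => /fintype.subsetPn[x hxF]; rewrite inE negbK => hxS.
  move/cards2P: h2 => [u [v [huv Fe]]].
  have [y [hxy Fxy]] : exists y, x != y /\ F = [set x; y].
    move: hxF; rewrite Fe !inE => /orP[] /eqP ->.
      by exists v.
    by exists u; split; [rewrite eq_sym | rewrite finset.setUC].
  apply/imsetP; exists (y, x) => //=.
  by rewrite inE /Nb inE hxS /adj hxy -Fxy hF.
apply: (leq_trans (leq_card_setU _ _)).
rewrite hEin leq_add2l -pairs_card; exact: leq_imset_card.
Qed.

End KST.
Section Nat.
Local Open Scope nat_scope.


Lemma ffact_low m t : (m - t) ^ t <= m ^_ t.
Proof.
elim: t => [|t IH]; first by rewrite ffactn0.
rewrite ffactnSr expnS mulnC; apply: leq_mul; last by apply: leq_sub2l.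
case: t IH => [|t] IH; first by rewrite !expn0.
apply: leq_trans IH; rewrite leq_exp2r // leq_sub2l //.
Qed.

Lemma ffact_up n t : n ^_ t <= n ^ t.
Proof.
elim: t => [|t IH]; first by rewrite ffactn0.
rewrite ffactnSr expnS mulnC; apply: leq_mul => //; exact: leq_subr.
Qed.

Lemma bin_ratio n m t L : n <= L * (m - t) -> 'C(n, t) <= L ^ t * 'C(m, t).
Proof.
move=> h; rewrite -(leq_pmul2r (fact_gt0 t)) -mulnA !bin_ffact.
apply: (leq_trans (ffact_up n t)).
apply: (@leq_trans ((L * (m - t)) ^ t)).
  by case: t h => [|t] h; rewrite ?expn0 // leq_exp2r.
rewrite expnMn leq_mul2l ffact_low orbT //.
Qed.

Definition N0 K t := 8 * K * (t + 1) + 4 * K * (t - 1) * (8 * K) ^ t + 3.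

Lemma big_count (n K t : nat) (d : 'I_n -> nat) : 0 < K -> 0 < t ->
  (forall y, d y <= n) -> N0 K t <= n ->
  n * (n - 1) < 2 * K * \sum_y d y ->
  (t - 1) * 'C(n, t) < \sum_y 'C(d y, t).
Proof.
move=> K0 t0 hd hn hD.
set L := 4 * K.
have L0 : 0 < L by rewrite /L; lia.
pose B := [set y : 'I_n | n <= L * d y].
pose m := n %/ L.
have split1 : \sum_y d y = \sum_(y in B) d y + \sum_(y in ~: B) d y.
  rewrite (bigID (fun y => y \in B)) /=; congr (_ + _).
  by apply: eq_bigl => y; rewrite finset.in_setC.
have hB1 : \sum_(y in B) d y <= #|B| * n.
  rewrite -sum_nat_const; apply: leq_sum => y _; exact: hd.
have hB2 : L * \sum_(y in ~: B) d y <= n * n.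
  rewrite big_distrr /=.
  apply: (@leq_trans (\sum_(y in ~: B) n)).
    apply: leq_sum => y; rewrite !inE -ltnNge => h; exact: ltnW.
  rewrite sum_nat_const mulnC leq_mul2l; apply/orP; right.
  by rewrite -[X in _ <= X](card_ord n) max_card.
set D := \sum_y d y in hD split1.
set Bc := #|B| in hB1.
set D1 := \sum_(y in B) d y in split1 hB1.
set D2 := \sum_(y in ~: B) d y in split1 hB2.
have hBn : n < L * Bc + 2.
  have e1 : L * D <= L * Bc * n + n * n.
    rewrite split1 mulnDr -mulnA; apply: leq_add => //; by rewrite leq_mul2l hB1 orbT.
  have e2 : 2 * (n * (n - 1)) < L * D by rewrite /L; nia.
  nia.
have hm : forall y, y \in B -> m <= d y.
  move=> y; rewrite inE => h.
  have := leq_divM n L; rewrite -/m => h2.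
  have : m * L <= L * d y by apply: leq_trans h2 h.
  by rewrite mulnC leq_pmul2l.
have lowS : #|B| * 'C(m, t) <= \sum_y 'C(d y, t).
  apply: (@leq_trans (\sum_(y in B) 'C(d y, t))).
    rewrite -sum_nat_const; apply: leq_sum => y hy; apply: leq_bin2l; exact: hm.
  rewrite [X in _ <= X](bigID (fun y => y \in B)) /=; exact: leq_addr.
have hmL : n < (m + 1) * L by rewrite addn1; apply: ltn_ceil.
have hnm : n <= (2 * L) * (m - t).
  have : 2 * L * (t + 1) <= n.
    apply: leq_trans hn; rewrite /N0 /L -addnA mulnA; exact: leq_addr.
  nia.
have hC := bin_ratio hnm.
have hmt : t <= m by nia.
have Cpos : 0 < 'C(m, t) by rewrite bin_gt0.
set Q := (2 * L) ^ t in hC.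
have hQ : (t - 1) * Q < Bc.
  have : L * (t - 1) * Q + 3 <= n.
    apply: leq_trans hn; rewrite /N0 /Q /L (mulnA 2 4 K) leq_add2r; exact: leq_addl.
  nia.
apply: leq_trans lowS.
apply: (@leq_ltn_trans ((t - 1) * (Q * 'C(m, t)))).
  by rewrite leq_mul2l hC orbT.
rewrite mulnA ltn_pmul2r //.
Qed.

Lemma bin2_mul k : 2 * 'C(k, 2) = k * (k - 1).
Proof. by rewrite mulnC (bin_ffact k 2) !ffactnSr ffactn0 mul1n subn0. Qed.

Lemma chain K n s1 s e Cs C2 D : s1 <= s -> s <= n -> e <= Cs + D ->
  2 * Cs = (n - s) * (n - s - 1) -> 2 * C2 = n * (n - 1) ->
  K * n * C2 + n * C2 < K * C2 * s1 + K * n * e -> n * (n - 1) < 2 * K * D.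
Proof.
move=> h1 h2 h3 h4 h5 h.
have a1 : K * C2 * s1 <= K * C2 * s by rewrite leq_mul2l h1 orbT.
have a2 : K * n * e <= K * n * Cs + K * n * D by rewrite -mulnDr leq_mul2l h3 orbT.
have a3 : n * (2 * Cs) <= (n - s) * (2 * C2).
  rewrite h4 h5 mulnCA; apply: leq_mul => //; apply: leq_mul => //.
  by apply: leq_sub2r; apply: leq_subr.
have a4 : K * n * Cs <= K * (n - s) * C2.
  rewrite -(leq_pmul2l (isT : 0 < 2)).
  have e1 : 2 * (K * n * Cs) = K * (n * (2 * Cs)) by ring.
  have e2 : 2 * (K * (n - s) * C2) = K * ((n - s) * (2 * C2)) by ring.
  by rewrite e1 e2 leq_mul2l a3 orbT.
have a5 : K * C2 * s + K * (n - s) * C2 = K * n * C2.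
  have -> : K * n * C2 = K * (s + (n - s)) * C2 by rewrite subnKC.
  ring.
have a6 : n * C2 < K * n * D.
  move: h a1 a2 a4 a5.
  move: (K * n * C2) (n * C2) (K * C2 * s1) (K * n * e) (K * C2 * s)
        (K * n * Cs) (K * n * D) (K * (n - s) * C2) => x1 x2 x3 x4 x5 x6 x7 x8.
  lia.
have a7 : C2 < K * D.
  have n0 : 0 < n by case: n a6 {h2 h3 h4 h5 h a1 a2 a3 a4 a5} => //; rewrite !mul0n muln0.
  by rewrite -(ltn_pmul2l n0) mulnA (mulnC n K).
rewrite -mulnA; move: a7 h5; move: (K * D) (n * (n - 1)) => y z; lia.
Qed.

End Nat.

Local Open Scope ring_scope.

Lemma hn_split (R : realType) (n : nat) (G : {set {set 'I_n}}) :
  (forall F, F \in G -> #|F| = 1%N \/ #|F| = 2%N) ->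
  hn R G = #|[set F in G | #|F| == 1%N]|%:R / n%:R
         + #|[set F in G | #|F| == 2%N]|%:R / ('C(n, 2))%:R.
Proof.
move=> hG; rewrite /hn (bigID (fun F : {set _} => #|F| == 1%N)) /=.
congr (_ + _).
  rewrite (eq_bigr (fun _ => (n%:R)^-1)); last by move=> F /andP[_ /eqP ->]; rewrite bin1.
  rewrite (eq_bigl (fun F => F \in [set F in G | #|F| == 1%N])); last first.
    by move=> F; rewrite !finset.inE.
  by rewrite sumr_const mulr_natl.
rewrite (eq_bigr (fun _ => ('C(n, 2)%:R)^-1)); last first.
  move=> F /andP[hF h1]; case: (hG F hF) => h; first by rewrite h in h1.
  by rewrite h.
rewrite (eq_bigl (fun F => F \in [set F in G | #|F| == 2%N])); last first.
  move=> F; rewrite !finset.inE; case hF: (F \in G) => //=.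
  by case: (hG F hF) => ->.
by rewrite sumr_const mulr_natl.
Qed.

Lemma dense_sub (R : realType) (V : finType) (H : {set {set V}}) (c : V -> bool)
  (n K : nat) (G : {set {set 'I_n}}) :
  (forall F, F \in H -> #|F| = 1%N \/ #|F| = 2%N) ->
  (forall x y, x != y -> [set x; y] \in H -> c x != c y) ->
  (forall k : nat, (0 < k)%N -> ~~ subhyp (closed_path (2 * k)) H) ->
  (0 < K)%N -> (0 < #|V|)%N -> (N0 K #|V| <= n)%N ->
  (forall F, F \in G -> #|F| = 1%N \/ #|F| = 2%N) ->
  1 + (K%:R)^-1 < hn R G -> subhyp H G.
Proof.
move=> hH hc hP K0 V0 hn hG hlt.
have n3 : (3 <= n)%N by apply: leq_trans hn; rewrite /N0 leq_addl.
rewrite (hn_split R hG) in hlt.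
set s1 := #|[set F in G | #|F| == 1%N]| in hlt.
set e := #|[set F in G | #|F| == 2%N]| in hlt.
set C2 := 'C(n, 2) in hlt.
have C20 : (0 < C2)%N by rewrite bin_gt0; apply: leq_trans n3.
have hnat : (K * n * C2 + n * C2 < K * C2 * s1 + K * n * e)%N.
  rewrite -(ltr_nat R) !natrD !natrM.
  have a0 : (0 : R) < n%:R by rewrite ltr0n; apply: leq_trans n3.
  have b0 : (0 : R) < C2%:R by rewrite ltr0n.
  have k0 : (0 : R) < K%:R by rewrite ltr0n.
  have hm : 0 < K%:R * n%:R * C2%:R :> R by rewrite !mulr_gt0.
  have E1 : (1 + K%:R^-1) * (K%:R * n%:R * C2%:R) = K%:R * n%:R * C2%:R + n%:R * C2%:R :> R.
    field; rewrite gt_eqF //.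
  have E2 : (s1%:R / n%:R + e%:R / C2%:R) * (K%:R * n%:R * C2%:R) =
            K%:R * C2%:R * s1%:R + K%:R * n%:R * e%:R :> R.
    field; rewrite !gt_eqF //.
  by rewrite -E1 -E2 ltr_pM2r.
set S := Sset G.
have h1 := s1_le G.
have h2 : (#|S| <= n)%N by rewrite -[X in (_ <= X)%N](card_ord n) max_card.
have h3 := e_le G.
have hD := chain h1 h2 h3 (bin2_mul _) (bin2_mul _) hnat.
have dle : forall y, (#|Nb G y| <= n)%N.
  by move=> y; rewrite -[X in (_ <= X)%N](card_ord n) max_card.
have := big_count K0 V0 dle hn hD.
case/(kst V0) => X [Y [hX hY hXS hXY]].
have z : 'I_n by exists 0%N; apply: leq_trans n3.
apply: (@embed V H n G X Y z c hH hc hP).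
- by rewrite hX.
- exact: hY.
- by move=> x hx; have := fintype.subsetP hXS x hx; rewrite finset.inE.
- move=> x y hx hy; exact: hXY.
Qed.

Lemma pin_lb (R : realType) (V : finType) (H : {set {set V}}) (n : nat) :
  (forall k : nat, hsizes H k = (k == 1)%N || (k == 2)%N) ->
  (0 < n)%N -> 1 <= pin R H n.
Proof.
move=> hs n0.
have [F2 hF2 hF2c] : exists2 F, F \in H & #|F| = 2%N.
  have := hs 2%N; rewrite /= => /existsP[F /andP[hF /eqP h]]; by exists F.
pose G1 := [set [set x] | x : 'I_n].
have hG1 : forall F, F \in G1 -> #|F| = 1%N by move=> F /imsetP[x _ ->]; rewrite cards1.
have adm : admissible H G1.
  apply/andP; split.
    apply/forallP => F; apply/implyP => hF; by rewrite hs (hG1 F hF).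
  apply/negP => /existsP[f /andP[/injectiveP finj /forallP hf]].
  have := implyP (hf F2) hF2 => /hG1; rewrite card_imset //; by rewrite hF2c.
apply: (le_trans _ (le_bigmax_cond _ _ adm)).
rewrite /hn (eq_bigr (fun _ => (n%:R)^-1)); last first.
  by move=> F hF; rewrite (hG1 F hF) bin1.
rewrite sumr_const card_imset; last exact: set1_inj.
rewrite card_ord; have -> : (n%:R^-1 *+ n = n%:R^-1 * n%:R :> R) by rewrite mulr_natr.
by rewrite mulVf // pnatr_eq0 -lt0n n0.
Qed.

Lemma pin_ub (R : realType) (V : finType) (H : {set {set V}}) (c : V -> bool)
  (n K : nat) :
  (forall k : nat, hsizes H k = (k == 1)%N || (k == 2)%N) ->
  (forall x y, x != y -> [set x; y] \in H -> c x != c y) ->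
  (forall k : nat, (0 < k)%N -> ~~ subhyp (closed_path (2 * k)) H) ->
  (0 < K)%N -> (0 < #|V|)%N -> (N0 K #|V| <= n)%N ->
  pin R H n <= 1 + (K%:R)^-1.
Proof.
move=> hs hc hP K0 V0 hn.
have hH : forall F, F \in H -> #|F| = 1%N \/ #|F| = 2%N.
  move=> F hF; have : hsizes H #|F| by apply/existsP; exists F; rewrite hF eqxx.
  by rewrite hs => /orP[] /eqP ->; [left|right].
apply: bigmax_le.
  by apply: addr_ge0 => //; rewrite invr_ge0 ler0n.
move=> G /andP[/forallP hG hns].
rewrite leNgt; apply/negP => hlt.
have hG' : forall F, F \in G -> #|F| = 1%N \/ #|F| = 2%N.
  move=> F hF; have := implyP (hG F) hF; rewrite hs.
  by case/orP => /eqP ->; [left|right].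
by move/negP: hns; apply; apply: (dense_sub hH hc hP K0 V0 hn hG' hlt).
Qed.

Unset Implicit Arguments.
Local Open Scope classical_set_scope.
Local Open Scope ring_scope.

Theorem mainTheorem10 (R : realType) (V : finType) (H : {set {set V}}) :
  (forall k : nat, hsizes H k = (k == 1)%N || (k == 2)%N) ->
  bipartite2 H ->
  (forall k : nat, (0 < k)%N -> ~~ subhyp (closed_path (2 * k)) H) ->
  (fun n : nat => pin R H n) @ \oo --> (1 : R).
Proof.
move=> hs [c hc] hP.
have V0 : (0 < #|V|)%N.
  have := hs 2%N; rewrite /= => /existsP[F /andP[_ /eqP h]].
  by apply: leq_trans (max_card F); rewrite h.
apply/cvgrPdist_le => eps eps0.
set K := (Num.truncn (eps^-1)).+1.
have K0 : (0 < K)%N by [].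
have hK : (K%:R)^-1 < eps.
  have h := truncnS_gt (eps^-1).
  rewrite invf_plt ?posrE ?ltr0n //.
apply: filterS (nbhs_infty_ge (maxn 1 (N0 K #|V|))) => n.
rewrite geq_max => /andP[n1 hn] /=.
have lb := pin_lb R hs n1.
have ub := pin_ub R hs hc hP K0 V0 hn.
rewrite ler_norml; apply/andP; split; lra.
Qed.
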